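(* Let $T\subset\mathbb{R}^2$ be a triangle and let $\Lambda\subset\mathbb{R}^2$ be a $2$-dimensional lattice. If $T$ is lattice complete with respect to $\Lambda$, then $T$ is lattice reduced with respect to $\Lambda$. The converse does not hold: there exist a $2$-dimensional lattice and a triangle that is lattice reduced but not lattice complete with respect to it.
   Context: A lattice $\Lambda\subset\mathbb{R}^2$ is a discrete subgroup spanning $\mathbb{R}^2$, with dual lattice $\Lambda^\star=\{y: x\cdot y\in\mathbb{Z}\ \forall x\in\Lambda\}$. For a convex body $C$ (compact convex set with non-empty interior), the lattice width is $\mathrm{wdt}_\Lambda(C)=\min_{y\in\Lambda^\star\setminus\{0\}}\max_{a,b\in C}y\cdot(a-b)$. A segment $[a,b]$ is a lattice segment if $b-a$ is parallel to a nonzero vector of $\Lambda$; its lattice length is $|b-a|/|v|$ where $v$ generates $\Lambda\cap\mathrm{span}\{b-a\}$ and is a positive multiple of $b-a$. The lattice diameter $\mathrm{diam}_\Lambda(C)$ is the maximum lattice length of a lattice segment in $C$. $C$ is lattice reduced if no convex body $C'\subsetneq C$ has $\mathrm{wdt}_\Lambda(C')=\mathrm{wdt}_\Lambda(C)$; lattice complete if no convex body $C'\supsetneq C$ has $\mathrm{diam}_\Lambda(C')=\mathrm{diam}_\Lambda(C)$. *)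

(* Defs.v *)
From Stdlib Require Import Reals ZArith.
From Coquelicot Require Import Coquelicot.
Open Scope R_scope.

Definition pt := (R * R)%type.

Definition vadd (x y : pt) : pt := (fst x + fst y, snd x + snd y).
Definition vsub (x y : pt) : pt := (fst x - fst y, snd x - snd y).
Definition vscale (t : R) (x : pt) : pt := (t * fst x, t * snd x).
Definition dot (x y : pt) : R := fst x * fst y + snd x * snd y.
Definition vnorm (x : pt) : R := sqrt (dot x x).
Definition det2 (x y : pt) : R := fst x * snd y - snd x * fst y.
Definition origin : pt := (0, 0).

Definition is_lattice (L : pt -> Prop) : Prop :=
  L origin /\
  (forall x y, L x -> L y -> L (vsub x y)) /\
  (forall x, L x -> exists eps, eps > 0 /\
       forall y, L y -> vnorm (vsub y x) < eps -> y = x) /\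
  (exists u v, L u /\ L v /\ det2 u v <> 0).

Definition dual (L : pt -> Prop) (y : pt) : Prop :=
  forall x, L x -> exists k : Z, dot x y = IZR k.

Definition convex (C : pt -> Prop) : Prop :=
  forall a b t, C a -> C b -> 0 <= t <= 1 -> C (vadd a (vscale t (vsub b a))).
Definition bounded (C : pt -> Prop) : Prop :=
  exists M, forall x, C x -> vnorm x <= M.
Definition closed_set (C : pt -> Prop) : Prop :=
  forall x, (forall eps, eps > 0 -> exists y, C y /\ vnorm (vsub y x) < eps) -> C x.
Definition nonempty_interior (C : pt -> Prop) : Prop :=
  exists x eps, eps > 0 /\ forall y, vnorm (vsub y x) < eps -> C y.
Definition convex_body (C : pt -> Prop) : Prop :=
  convex C /\ bounded C /\ closed_set C /\ nonempty_interior C.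

Definition strict_subset (A B : pt -> Prop) : Prop :=
  (forall x, A x -> B x) /\ exists x, B x /\ ~ A x.

Definition dir_width (C : pt -> Prop) (y : pt) : Rbar :=
  Lub_Rbar (fun w => exists a b, C a /\ C b /\ w = dot y (vsub a b)).

Definition lattice_width (L C : pt -> Prop) : Rbar :=
  Glb_Rbar (fun w => exists y, dual L y /\ y <> origin /\ dir_width C y = Finite w).

Definition lattice_segment_length (L : pt -> Prop) (a b : pt) (t : R) : Prop :=
  a <> b /\
  exists v, L v /\ v <> origin /\
    (exists s, s > 0 /\ v = vscale s (vsub b a)) /\
    (forall x, L x -> (exists r, x = vscale r (vsub b a)) ->
        exists k : Z, x = vscale (IZR k) v) /\
    t = vnorm (vsub b a) / vnorm v.

Definition lattice_diam (L C : pt -> Prop) : Rbar :=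
  Lub_Rbar (fun t => exists a b, C a /\ C b /\ lattice_segment_length L a b t).

Definition lattice_reduced (L C : pt -> Prop) : Prop :=
  forall C', convex_body C' -> strict_subset C' C ->
    lattice_width L C' <> lattice_width L C.

Definition lattice_complete (L C : pt -> Prop) : Prop :=
  forall C', convex_body C' -> strict_subset C C' ->
    lattice_diam L C' <> lattice_diam L C.

Definition triangle_hull (p q r : pt) (x : pt) : Prop :=
  exists l1 l2 l3, 0 <= l1 /\ 0 <= l2 /\ 0 <= l3 /\ l1 + l2 + l3 = 1 /\
    x = vadd (vscale l1 p) (vadd (vscale l2 q) (vscale l3 r)).

Definition noncollinear (p q r : pt) : Prop := det2 (vsub q p) (vsub r p) <> 0.

(* Main.v *)
Require Import Defs.
From Stdlib Require Import Reals ZArith Lra Lia Psatz Classical FunctionalExtensionality PropExtensionality.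
From Coquelicot Require Import Coquelicot.
Open Scope R_scope.

Lemma pt_eq (x y : pt) : fst x = fst y -> snd x = snd y -> x = y.
Proof. destruct x, y; simpl; intros; subst; reflexivity. Qed.

Lemma vnorm_nonneg w : 0 <= vnorm w.
Proof. apply sqrt_pos. Qed.

Lemma vnorm_ge_fst w : Rabs (fst w) <= vnorm w.
Proof. unfold vnorm, dot. rewrite <- sqrt_Rsqr_abs. apply sqrt_le_1_alt. unfold Rsqr. nra. Qed.

Lemma vnorm_ge_snd w : Rabs (snd w) <= vnorm w.
Proof. unfold vnorm, dot. rewrite <- sqrt_Rsqr_abs. apply sqrt_le_1_alt. unfold Rsqr. nra. Qed.

Lemma vnorm_le_sum w : vnorm w <= Rabs (fst w) + Rabs (snd w).
Proof.
  unfold vnorm, dot.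
  assert (H0 : 0 <= Rabs (fst w) + Rabs (snd w)) by (pose proof (Rabs_pos (fst w)); pose proof (Rabs_pos (snd w)); lra).
  rewrite <- (sqrt_Rsqr _ H0). apply sqrt_le_1_alt. unfold Rsqr.
  unfold Rabs; destruct (Rcase_abs (fst w)); destruct (Rcase_abs (snd w)); nra.
Qed.

Lemma vnorm_scale k w : vnorm (vscale k w) = Rabs k * vnorm w.
Proof.
  unfold vnorm, dot, vscale; simpl.
  replace (k * fst w * (k * fst w) + k * snd w * (k * snd w)) with (Rsqr k * (fst w * fst w + snd w * snd w)) by (unfold Rsqr; ring).
  rewrite sqrt_mult. rewrite sqrt_Rsqr_abs. reflexivity. apply Rle_0_sqr. nra.
Qed.

Lemma vnorm_pos w : w <> origin -> 0 < vnorm w.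
Proof.
  intros H. unfold vnorm, dot. apply sqrt_lt_R0. destruct w as [a b].
  simpl. destruct (Req_dec a 0); destruct (Req_dec b 0).
  - subst. exfalso. apply H. reflexivity.
  - nra. - nra. - nra.
Qed.

Lemma vsub_origin w : vsub w origin = w.
Proof. apply pt_eq; unfold vsub, origin; simpl; ring. Qed.

Lemma vsub_eq0 x y : vsub x y = origin -> x = y.
Proof.
  destruct x, y; unfold vsub, origin; simpl; intros H; injection H; intros.
  apply pt_eq; simpl; lra.
Qed.

Lemma L_origin L : is_lattice L -> L origin.
Proof. intros [H _]; exact H. Qed.

Lemma L_sub L x y : is_lattice L -> L x -> L y -> L (vsub x y).
Proof. intros [_ [H _]]; auto. Qed.

Lemma L_neg L x : is_lattice L -> L x -> L (vscale (-1) x).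
Proof.
  intros HL Hx. replace (vscale (-1) x) with (vsub origin x).
  apply L_sub; auto. apply L_origin; auto.
  apply pt_eq; unfold vsub, vscale, origin; simpl; ring.
Qed.

Lemma L_add L x y : is_lattice L -> L x -> L y -> L (vadd x y).
Proof.
  intros HL Hx Hy. replace (vadd x y) with (vsub x (vscale (-1) y)).
  apply L_sub; auto. apply L_neg; auto.
  apply pt_eq; unfold vsub, vadd, vscale; simpl; ring.
Qed.

Lemma L_nmul L g (n : nat) : is_lattice L -> L g -> L (vscale (INR n) g).
Proof.
  intros HL Hg. induction n.
  - replace (vscale (INR 0) g) with origin. apply L_origin; auto.
    apply pt_eq; unfold vscale, origin; simpl; ring.
  - replace (vscale (INR (S n)) g) with (vadd (vscale (INR n) g) g).
    apply L_add; auto.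
    apply pt_eq; unfold vadd, vscale; rewrite S_INR; simpl; ring.
Qed.

Lemma L_zmul L g (k : Z) : is_lattice L -> L g -> L (vscale (IZR k) g).
Proof.
  intros HL Hg. destruct k.
  - replace (vscale (IZR 0) g) with origin. apply L_origin; auto.
    apply pt_eq; unfold vscale, origin; simpl; ring.
  - rewrite <- positive_nat_Z. rewrite <- INR_IZR_INZ. apply L_nmul; auto.
  - replace (vscale (IZR (Z.neg p)) g) with (vscale (-1) (vscale (IZR (Z.pos p)) g)).
    apply L_neg; auto. rewrite <- positive_nat_Z. rewrite <- INR_IZR_INZ. apply L_nmul; auto.
    apply pt_eq; unfold vscale; cbn [fst snd]; change (IZR (Z.neg p)) with (- IZR (Z.pos p)); ring.
Qed.

Lemma L_discrete L : is_lattice L -> exists r, r > 0 /\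
  forall x y, L x -> L y -> vnorm (vsub x y) < r -> x = y.
Proof.
  intros HL. pose proof HL as [H0 [Hs [Hd _]]].
  destruct (Hd origin H0) as [eps [Heps Hx]]. exists eps. split; auto.
  intros x y Lx Ly Hn. apply vsub_eq0. apply Hx. apply Hs; auto.
  rewrite vsub_origin. auto.
Qed.

Lemma L_norm_lb L : is_lattice L -> exists r, r > 0 /\
  forall x, L x -> x <> origin -> r <= vnorm x.
Proof.
  intros HL. destruct (L_discrete L HL) as [r [Hr H]]. exists r; split; auto.
  intros x Lx Hx. destruct (Rlt_le_dec (vnorm x) r); auto.
  exfalso. apply Hx. apply H; auto. apply L_origin; auto. rewrite vsub_origin; auto.
Qed.

Lemma vscale_inj a b z : z <> origin -> vscale a z = vscale b z -> a = b.
Proof.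
  intros Hz H. destruct z as [z1 z2]. unfold vscale in H; simpl in H. injection H; intros H2 H1.
  destruct (Req_dec z1 0).
  - subst. destruct (Req_dec z2 0). subst; exfalso; apply Hz; reflexivity.
    apply Rmult_eq_reg_r with z2; auto.
  - apply Rmult_eq_reg_r with z1; auto.
Qed.

Lemma vscale_nz a z : a <> 0 -> z <> origin -> vscale a z <> origin.
Proof.
  intros Ha Hz H. apply Ha. apply (vscale_inj a 0 z Hz). rewrite H.
  apply pt_eq; unfold vscale, origin; simpl; ring.
Qed.

Lemma prim L z : is_lattice L -> L z -> z <> origin ->
  exists g, L g /\ g <> origin /\
    (forall x, L x -> (exists r, x = vscale r g) -> exists k : Z, x = vscale (IZR k) g) /\
    exists k : Z, (1 <= k)%Z /\ z = vscale (IZR k) g.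
Proof.
  intros HL Lz Hz.
  destruct (L_discrete L HL) as [r0 [Hr0 Hdisc]].
  pose proof (vnorm_pos z Hz) as Hnz. set (nz := vnorm z) in *.
  set (S := fun s => s > 0 /\ L (vscale s z)).
  assert (HSlb : forall s, S s -> r0 / nz <= s).
  { intros s [Hs Ls]. destruct (Rlt_le_dec s (r0/nz)) as [Hlt|]; auto. exfalso.
    assert (H : vscale s z = origin).
    { apply Hdisc; auto. apply L_origin; auto. rewrite vsub_origin, vnorm_scale, Rabs_pos_eq by lra.
      fold nz. apply (Rmult_lt_compat_r nz) in Hlt; auto. unfold Rdiv in Hlt.
      rewrite Rmult_assoc, Rinv_l in Hlt; lra. }
    revert H. apply vscale_nz; auto. lra. }
  set (E := fun x => S (-x)).
  assert (HEb : bound E). { exists 0. intros x [Hx _]. lra. }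
  assert (HEn : exists x, E x).
  { exists (-1). unfold E, S. split. lra. replace (vscale (- -1) z) with z; auto.
    apply pt_eq; unfold vscale; simpl; ring. }
  destruct (completeness E HEb HEn) as [m [Hub Hlub]].
  set (s0 := - m).
  assert (Hs0lb : forall s, S s -> s0 <= s).
  { intros s Hs. assert (E (-s)) by (unfold E; rewrite Ropp_involutive; auto).
    apply Hub in H. unfold s0; lra. }
  assert (Hs0pos : r0 / nz <= s0).
  { assert (m <= - (r0/nz)). { apply Hlub. intros x Ex. apply HSlb in Ex. lra. }
    unfold s0; lra. }
  assert (Hr0nz : 0 < r0 / nz) by (apply Rdiv_lt_0_compat; lra).
  assert (Happ : forall eps, eps > 0 -> exists s, S s /\ s < s0 + eps).
  { intros eps Heps. destruct (classic (exists s, S s /\ s < s0 + eps)) as [H|H]; auto.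
    exfalso. assert (m <= m - eps); [|lra]. apply Hlub. intros x Ex.
    destruct (Rle_lt_dec x (m - eps)); auto. exfalso. apply H. exists (-x). split; auto.
    unfold s0; lra. }
  assert (HS0 : S s0).
  { destruct (classic (S s0)) as [H|H]; auto. exfalso.
    destruct (Happ (r0/nz) Hr0nz) as [s1 [Hs1 Hs1b]].
    assert (Hs1g : s0 < s1). { pose proof (Hs0lb s1 Hs1). destruct (Req_dec s1 s0). subst; contradiction. lra. }
    destruct (Happ (s1 - s0)) as [s2 [Hs2 Hs2b]]. lra.
    pose proof (Hs0lb s2 Hs2).
    assert (Heq : vscale s1 z = vscale s2 z).
    { apply Hdisc. apply Hs1. apply Hs2.
      replace (vsub (vscale s1 z) (vscale s2 z)) with (vscale (s1 - s2) z)
        by (apply pt_eq; unfold vsub, vscale; simpl; ring).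
      rewrite vnorm_scale, Rabs_pos_eq by lra. fold nz.
      apply Rlt_le_trans with (r0 / nz * nz). apply Rmult_lt_compat_r; lra.
      unfold Rdiv; rewrite Rmult_assoc, Rinv_l; lra. }
    apply vscale_inj in Heq; auto. lra. }
  assert (Hs0p : 0 < s0) by lra.
  set (g := vscale s0 z).
  assert (Hkey : forall x r, L x -> x = vscale r z -> exists k : Z, x = vscale (IZR k) g).
  { intros x r Lx Hx. set (k := Zfloor (r / s0)). exists k.
    pose proof (Zfloor_bound (r / s0)) as [Hk1 Hk2]. fold k in Hk1, Hk2.
    set (r' := r - IZR k * s0).
    assert (Hr'0 : 0 <= r').
    { unfold r'. apply (Rmult_le_compat_r s0) in Hk1; [|lra].
      unfold Rdiv in Hk1; rewrite Rmult_assoc, Rinv_l in Hk1; lra. }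
    assert (Hr'1 : r' < s0).
    { unfold r'. apply (Rmult_lt_compat_r s0) in Hk2; [|lra].
      unfold Rdiv in Hk2; rewrite Rmult_assoc, Rinv_l in Hk2; lra. }
    assert (Lr' : L (vscale r' z)).
    { replace (vscale r' z) with (vsub x (vscale (IZR k) g)).
      apply L_sub; auto. apply L_zmul; auto. apply HS0.
      rewrite Hx. apply pt_eq; unfold r', g, vsub, vscale; simpl; ring. }
    destruct (Req_dec r' 0) as [H0|H0].
    - rewrite Hx. apply pt_eq; unfold g, vscale; simpl; unfold r' in H0;
      replace r with (IZR k * s0) by lra; ring.
    - exfalso. assert (S r') by (split; auto; lra). apply Hs0lb in H. lra. }
  exists g. split; [apply HS0|]. split.
  { unfold g. apply vscale_nz; auto. lra. }
  split.
  - intros x Lx [r Hr]. apply (Hkey x (r * s0)); auto. rewrite Hr. unfold g.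
    apply pt_eq; unfold vscale; simpl; ring.
  - destruct (Hkey z 1 Lz) as [k Hk]. apply pt_eq; unfold vscale; simpl; ring.
    exists k. split; auto.
    assert (Hk1 : 1 = IZR k * s0).
    { apply (vscale_inj _ _ z Hz).
      replace (vscale (IZR k * s0) z) with (vscale (IZR k) g) by (unfold g; apply pt_eq; unfold vscale; simpl; ring).
      rewrite <- Hk. apply pt_eq; unfold vscale; simpl; ring. }
    assert (0 < IZR k) by nra. apply lt_0_IZR in H. lia.
Qed.

Lemma lub_ge E x : E x -> Rbar_le (Finite x) (Lub_Rbar E).
Proof. intros Hx. destruct (Lub_Rbar_correct E) as [H _]. apply H; auto. Qed.

Lemma lub_le E M : (forall x, E x -> x <= M) -> Rbar_le (Lub_Rbar E) (Finite M).
Proof. intros H. destruct (Lub_Rbar_correct E) as [_ H2]. apply H2. intros x Hx. simpl. auto. Qed.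

Lemma glb_le E x : E x -> Rbar_le (Glb_Rbar E) (Finite x).
Proof. intros Hx. destruct (Glb_Rbar_correct E) as [H _]. apply H; auto. Qed.

Lemma glb_ge E M : (forall x, E x -> M <= x) -> Rbar_le (Finite M) (Glb_Rbar E).
Proof. intros H. destruct (Glb_Rbar_correct E) as [_ H2]. apply H2. intros x Hx. simpl. auto. Qed.

Lemma lub_fin E x0 M : E x0 -> (forall x, E x -> x <= M) ->
  exists l, Lub_Rbar E = Finite l /\ x0 <= l /\ l <= M.
Proof.
  intros H0 H. pose proof (lub_ge E x0 H0). pose proof (lub_le E M H).
  destruct (Lub_Rbar E) eqn:Heq; simpl in *; try contradiction. exists r; auto.
Qed.

Lemma lub_exact E w : E w -> (forall x, E x -> x <= w) -> Lub_Rbar E = Finite w.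
Proof.
  intros H0 H. destruct (lub_fin E w w H0 H) as [l [Hl [H1 H2]]]. rewrite Hl. f_equal. lra.
Qed.

Lemma glb_exact E w : E w -> (forall x, E x -> w <= x) -> Glb_Rbar E = Finite w.
Proof.
  intros H0 H. pose proof (glb_le E w H0). pose proof (glb_ge E w H).
  destruct (Glb_Rbar E) eqn:Heq; simpl in *; try contradiction. f_equal; lra.
Qed.

Lemma seg_t L a b t : lattice_segment_length L a b t ->
  exists v, L v /\ v <> origin /\ t > 0 /\ vsub b a = vscale t v.
Proof.
  intros [Hab [v [Lv [Hv0 [[s [Hs Hvs]] [_ Ht]]]]]].
  assert (Hba : vsub b a = vscale (1/s) v).
  { rewrite Hvs. apply pt_eq; unfold vscale; simpl; field; lra. }
  pose proof (vnorm_pos v Hv0).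
  assert (Ht' : t = 1 / s).
  { rewrite Ht, Hba, vnorm_scale, Rabs_pos_eq. field. split; lra.
    apply Rlt_le. apply Rdiv_lt_0_compat; lra. }
  exists v. repeat split; auto. rewrite Ht'. apply Rdiv_lt_0_compat; lra.
  rewrite Ht'. auto.
Qed.

Lemma seg_make L g a b t : L g -> g <> origin ->
  (forall x, L x -> (exists r, x = vscale r g) -> exists k : Z, x = vscale (IZR k) g) ->
  t > 0 -> vsub b a = vscale t g -> lattice_segment_length L a b t.
Proof.
  intros Lg Hg Hprim Ht Hba. split.
  { intros Heq. subst. apply (vscale_nz t g); auto. lra. rewrite <- Hba.
    apply pt_eq; unfold vsub, origin; simpl; ring. }
  exists g. split; auto. split; auto. split.
  { exists (1/t). split. apply Rdiv_lt_0_compat; lra. rewrite Hba.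
    apply pt_eq; unfold vscale; simpl; field; lra. }
  split.
  { intros x Lx [r Hr]. apply Hprim; auto. exists (r * t). rewrite Hr, Hba.
    apply pt_eq; unfold vscale; simpl; ring. }
  rewrite Hba, vnorm_scale, Rabs_pos_eq by lra. pose proof (vnorm_pos g Hg). field. lra.
Qed.

Definition la (A B w : pt) := det2 w B / det2 A B.
Definition lb (A B w : pt) := det2 A w / det2 A B.

Ltac dpts := repeat match goal with
  | p : pt |- _ => let a := fresh "x" in let b := fresh "y" in destruct p as [a b] end.

Lemma coord_decomp A B w : det2 A B <> 0 -> w = vadd (vscale (la A B w) A) (vscale (lb A B w) B).
Proof.
  intros H. dpts. unfold la, lb, det2, vadd, vscale in *; simpl in *.
  apply pt_eq; simpl; field; auto.
Qed.

Lemma coord_of A B w a b : det2 A B <> 0 -> w = vadd (vscale a A) (vscale b B) ->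
  la A B w = a /\ lb A B w = b.
Proof.
  intros H Hw. subst. dpts. unfold la, lb, det2, vadd, vscale in *; simpl in *.
  split; field; auto.
Qed.

Lemma la_lin A B k w1 w2 : det2 A B <> 0 ->
  la A B (vadd (vscale k w1) w2) = k * la A B w1 + la A B w2.
Proof. intros H. dpts. unfold la, det2, vadd, vscale in *; simpl in *. field; auto. Qed.

Lemma lb_lin A B k w1 w2 : det2 A B <> 0 ->
  lb A B (vadd (vscale k w1) w2) = k * lb A B w1 + lb A B w2.
Proof. intros H. dpts. unfold lb, det2, vadd, vscale in *; simpl in *. field; auto. Qed.

Lemma la_scale A B k w : det2 A B <> 0 -> la A B (vscale k w) = k * la A B w.
Proof. intros H. dpts. unfold la, det2, vscale in *; simpl in *. field; auto. Qed.
Lemma lb_scale A B k w : det2 A B <> 0 -> lb A B (vscale k w) = k * lb A B w.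
Proof. intros H. dpts. unfold lb, det2, vscale in *; simpl in *. field; auto. Qed.
Lemma la_sub A B w1 w2 : det2 A B <> 0 -> la A B (vsub w1 w2) = la A B w1 - la A B w2.
Proof. intros H. dpts. unfold la, det2, vsub in *; simpl in *. field; auto. Qed.
Lemma lb_sub A B w1 w2 : det2 A B <> 0 -> lb A B (vsub w1 w2) = lb A B w1 - lb A B w2.
Proof. intros H. dpts. unfold lb, det2, vsub in *; simpl in *. field; auto. Qed.

Definition cA (p q r x : pt) := la (vsub q p) (vsub r p) (vsub x p).
Definition cB (p q r x : pt) := lb (vsub q p) (vsub r p) (vsub x p).
Definition pt_at (p q r : pt) (a b : R) := vadd p (vadd (vscale a (vsub q p)) (vscale b (vsub r p))).

Lemma coords_at p q r a b : noncollinear p q r ->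
  cA p q r (pt_at p q r a b) = a /\ cB p q r (pt_at p q r a b) = b.
Proof.
  intros H. apply coord_of; auto. unfold pt_at. apply pt_eq; unfold vsub, vadd, vscale; simpl; ring.
Qed.

Lemma pt_decomp p q r x : noncollinear p q r -> x = pt_at p q r (cA p q r x) (cB p q r x).
Proof.
  intros H. pose proof (coord_decomp (vsub q p) (vsub r p) (vsub x p) H) as Hd.
  fold (cA p q r x) (cB p q r x) in Hd. unfold pt_at.
  set (a := cA p q r x) in *. set (b := cB p q r x) in *. clearbody a b.
  dpts. unfold vsub, vadd, vscale in *; simpl in *. injection Hd; intros.
  apply pt_eq; simpl; lra.
Qed.

Lemma hull_iff p q r x : noncollinear p q r ->
  (triangle_hull p q r x <-> 0 <= cA p q r x /\ 0 <= cB p q r x /\ cA p q r x + cB p q r x <= 1).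
Proof.
  intros H. split.
  - intros [l1 [l2 [l3 [H1 [H2 [H3 [H4 Hx]]]]]]].
    assert (Hc : cA p q r x = l2 /\ cB p q r x = l3).
    { apply coord_of; auto. rewrite Hx. replace l1 with (1 - l2 - l3) by lra.
      apply pt_eq; unfold vsub, vadd, vscale; simpl; ring. }
    destruct Hc as [-> ->]. lra.
  - intros [H1 [H2 H3]]. exists (1 - cA p q r x - cB p q r x), (cA p q r x), (cB p q r x).
    repeat split; try lra. rewrite (pt_decomp p q r x H) at 1. unfold pt_at.
    apply pt_eq; unfold vsub, vadd, vscale; simpl; ring.
Qed.

Lemma cA_aff p q r a b t : noncollinear p q r ->
  cA p q r (vadd a (vscale t (vsub b a))) = cA p q r a + t * (cA p q r b - cA p q r a).
Proof. intros H. unfold cA, noncollinear in *. dpts. unfold la, det2, vsub, vadd, vscale in *; simpl in *. field; auto. Qed.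
Lemma cB_aff p q r a b t : noncollinear p q r ->
  cB p q r (vadd a (vscale t (vsub b a))) = cB p q r a + t * (cB p q r b - cB p q r a).
Proof. intros H. unfold cB, noncollinear in *. dpts. unfold lb, det2, vsub, vadd, vscale in *; simpl in *. field; auto. Qed.

Lemma cA_diff p q r a b : noncollinear p q r ->
  la (vsub q p) (vsub r p) (vsub b a) = cA p q r b - cA p q r a.
Proof. intros H. unfold cA, noncollinear in *. dpts. unfold la, det2, vsub in *; simpl in *. field; auto. Qed.
Lemma cB_diff p q r a b : noncollinear p q r ->
  lb (vsub q p) (vsub r p) (vsub b a) = cB p q r b - cB p q r a.
Proof. intros H. unfold cB, noncollinear in *. dpts. unfold lb, det2, vsub in *; simpl in *. field; auto. Qed.

Lemma det_bound u v : Rabs (det2 u v) <= vnorm u * (Rabs (fst v) + Rabs (snd v)).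
Proof.
  unfold det2. pose proof (vnorm_ge_fst u). pose proof (vnorm_ge_snd u).
  pose proof (Rabs_pos (fst v)). pose proof (Rabs_pos (snd v)).
  pose proof (Rabs_pos (fst u)). pose proof (Rabs_pos (snd u)).
  eapply Rle_trans. unfold Rminus. apply Rabs_triang. rewrite Rabs_Ropp, !Rabs_mult.
  nra.
Qed.

Lemma cA_lip p q r : noncollinear p q r -> exists K, 0 <= K /\
  forall x y, Rabs (cA p q r y - cA p q r x) <= K * vnorm (vsub y x).
Proof.
  intros H. set (B := vsub r p). set (D := det2 (vsub q p) B).
  exists ((Rabs (fst B) + Rabs (snd B)) / Rabs D). split.
  { apply Rmult_le_pos. pose proof (Rabs_pos (fst B)); pose proof (Rabs_pos (snd B)); lra.
    apply Rlt_le, Rinv_0_lt_compat, Rabs_pos_lt; auto. }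
  intros x y. rewrite <- cA_diff; auto. unfold la. fold B D. unfold Rdiv. rewrite Rabs_mult, Rabs_inv.
  pose proof (det_bound (vsub y x) B). pose proof (Rabs_pos_lt D H).
  apply Rle_trans with (vnorm (vsub y x) * (Rabs (fst B) + Rabs (snd B)) * / Rabs D).
  apply Rmult_le_compat_r; [apply Rlt_le, Rinv_0_lt_compat; auto | auto].
  right; ring.
Qed.

Lemma det_bound2 u v : Rabs (det2 v u) <= vnorm u * (Rabs (fst v) + Rabs (snd v)).
Proof.
  replace (det2 v u) with (- det2 u v) by (unfold det2; ring). rewrite Rabs_Ropp. apply det_bound.
Qed.

Lemma cB_lip p q r : noncollinear p q r -> exists K, 0 <= K /\
  forall x y, Rabs (cB p q r y - cB p q r x) <= K * vnorm (vsub y x).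
Proof.
  intros H. set (A := vsub q p). set (D := det2 A (vsub r p)).
  exists ((Rabs (fst A) + Rabs (snd A)) / Rabs D). split.
  { apply Rmult_le_pos. pose proof (Rabs_pos (fst A)); pose proof (Rabs_pos (snd A)); lra.
    apply Rlt_le, Rinv_0_lt_compat, Rabs_pos_lt; auto. }
  intros x y. rewrite <- cB_diff; auto. unfold lb. fold A D. unfold Rdiv. rewrite Rabs_mult, Rabs_inv.
  pose proof (det_bound2 (vsub y x) A). pose proof (Rabs_pos_lt D H).
  apply Rle_trans with (vnorm (vsub y x) * (Rabs (fst A) + Rabs (snd A)) * / Rabs D).
  apply Rmult_le_compat_r; [apply Rlt_le, Rinv_0_lt_compat; auto | auto].
  right; ring.
Qed.

Lemma closed_lip (f : pt -> R) K c x : 0 <= K ->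
  (forall x y, Rabs (f y - f x) <= K * vnorm (vsub y x)) ->
  (forall eps, eps > 0 -> exists y, f y <= c /\ vnorm (vsub y x) < eps) -> f x <= c.
Proof.
  intros HK Hl Hc. destruct (Rle_lt_dec (f x) c) as [|Hlt]; auto. exfalso.
  set (eps := (f x - c) / (K + 1)).
  assert (Heps : eps > 0) by (apply Rdiv_lt_0_compat; lra).
  destruct (Hc eps Heps) as [y [Hy Hn]].
  pose proof (Hl x y). pose proof (vnorm_nonneg (vsub y x)).
  assert (K * vnorm (vsub y x) <= K * eps) by (apply Rmult_le_compat_l; lra).
  assert (K * eps * (K + 1) = K * (f x - c)) by (unfold eps; field; lra).
  assert (K * eps < f x - c) by nra.
  unfold Rabs in *; destruct Rcase_abs; lra.
Qed.

Lemma closed_lip_ge (f : pt -> R) K c x : 0 <= K ->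
  (forall x y, Rabs (f y - f x) <= K * vnorm (vsub y x)) ->
  (forall eps, eps > 0 -> exists y, c <= f y /\ vnorm (vsub y x) < eps) -> c <= f x.
Proof.
  intros HK Hl Hc. assert (- f x <= - c); [|lra].
  apply (closed_lip (fun z => - f z) K); auto.
  - intros a b. replace (- f b - - f a) with (- (f b - f a)) by ring. rewrite Rabs_Ropp. auto.
  - intros eps Heps. destruct (Hc eps Heps) as [y [H1 H2]]. exists y. split; auto. lra.
Qed.

Definition Qe (p q r : pt) (e : R) (x : pt) : Prop :=
  (0 <= cA p q r x <= 1) /\ (0 <= cB p q r x <= 1) /\ cA p q r x + cB p q r x <= 1 + e.

Lemma abs_comb u a v b w : 0 <= a <= 1 -> 0 <= b <= 1 ->
  Rabs (u + (a * v + b * w)) <= Rabs u + Rabs v + Rabs w.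
Proof.
  intros Ha Hb. eapply Rle_trans. apply Rabs_triang. eapply Rle_trans.
  apply Rplus_le_compat_l. apply Rabs_triang. rewrite !Rabs_mult, !(Rabs_pos_eq a), !(Rabs_pos_eq b) by lra.
  pose proof (Rabs_pos v). pose proof (Rabs_pos w). nra.
Qed.

Lemma Qe_body p q r e : noncollinear p q r -> 0 <= e -> convex_body (Qe p q r e).
Proof.
  intros H He. destruct (cA_lip p q r H) as [KA [HKA HA]]. destruct (cB_lip p q r H) as [KB [HKB HB]].
  split; [|split; [|split]].
  - intros a b t Ha Hb Ht. unfold Qe in *. rewrite cA_aff, cB_aff by auto.
    set (a1 := cA p q r a) in *. set (a2 := cB p q r a) in *.
    set (b1 := cA p q r b) in *. set (b2 := cB p q r b) in *.
    repeat split; nra.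
  - exists (Rabs (fst p) + Rabs (fst (vsub q p)) + Rabs (fst (vsub r p)) +
            (Rabs (snd p) + Rabs (snd (vsub q p)) + Rabs (snd (vsub r p)))).
    intros x Hx. unfold Qe in Hx. eapply Rle_trans. apply vnorm_le_sum.
    rewrite (pt_decomp p q r x H). unfold pt_at. unfold vadd at 1. simpl fst. simpl snd.
    unfold vadd, vscale. simpl fst; simpl snd.
    apply Rplus_le_compat; apply abs_comb; lra.
  - intros x Hx. unfold Qe.
    assert (Hsum : forall x y, Rabs ((cA p q r y + cB p q r y) - (cA p q r x + cB p q r x)) <= (KA + KB) * vnorm (vsub y x)).
    { intros a b. replace (cA p q r b + cB p q r b - (cA p q r a + cB p q r a)) with
        ((cA p q r b - cA p q r a) + (cB p q r b - cB p q r a)) by ring.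
      eapply Rle_trans. apply Rabs_triang. pose proof (HA a b). pose proof (HB a b). lra. }
    repeat split.
    + apply (closed_lip_ge (cA p q r) KA); auto. intros eps Heps. destruct (Hx eps Heps) as [y [Hy Hn]].
      exists y. unfold Qe in Hy. split; [tauto|auto].
    + apply (closed_lip (cA p q r) KA); auto. intros eps Heps. destruct (Hx eps Heps) as [y [Hy Hn]].
      exists y. unfold Qe in Hy. split; [tauto|auto].
    + apply (closed_lip_ge (cB p q r) KB); auto. intros eps Heps. destruct (Hx eps Heps) as [y [Hy Hn]].
      exists y. unfold Qe in Hy. split; [tauto|auto].
    + apply (closed_lip (cB p q r) KB); auto. intros eps Heps. destruct (Hx eps Heps) as [y [Hy Hn]].
      exists y. unfold Qe in Hy. split; [tauto|auto].
    + apply (closed_lip (fun z => cA p q r z + cB p q r z) (KA + KB)); auto. lra.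
      intros eps Heps. destruct (Hx eps Heps) as [y [Hy Hn]].
      exists y. unfold Qe in Hy. split; [tauto|auto].
  - set (x0 := pt_at p q r (1/4) (1/4)).
    destruct (coords_at p q r (1/4) (1/4) H) as [H1 H2]. fold x0 in H1, H2.
    exists x0, (1 / (8 * (KA + KB + 1))). split.
    { apply Rdiv_lt_0_compat; lra. }
    intros y Hy. pose proof (HA x0 y). pose proof (HB x0 y). rewrite H1 in *. rewrite H2 in *.
    pose proof (vnorm_nonneg (vsub y x0)).
    assert (KA * vnorm (vsub y x0) <= 1/8).
    { apply Rle_trans with ((KA + KB + 1) * (1 / (8 * (KA + KB + 1)))).
      apply Rmult_le_compat; lra. right; field; lra. }
    assert (KB * vnorm (vsub y x0) <= 1/8).
    { apply Rle_trans with ((KA + KB + 1) * (1 / (8 * (KA + KB + 1)))).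
      apply Rmult_le_compat; lra. right; field; lra. }
    unfold Qe. unfold Rabs in *. do 2 destruct Rcase_abs; repeat split; lra.
Qed.

Lemma T_sub_Qe p q r e x : noncollinear p q r -> 0 <= e -> triangle_hull p q r x -> Qe p q r e x.
Proof. intros H He Hx. apply hull_iff in Hx; auto. unfold Qe. lra. Qed.

Lemma Qe_strict p q r e : noncollinear p q r -> 0 < e <= 1 ->
  strict_subset (triangle_hull p q r) (Qe p q r e).
Proof.
  intros H He. split. intros x; apply T_sub_Qe; auto; lra.
  exists (pt_at p q r ((1+e)/2) ((1+e)/2)). destruct (coords_at p q r ((1+e)/2) ((1+e)/2) H) as [H1 H2].
  split. unfold Qe; rewrite H1, H2; lra.
  rewrite hull_iff, H1, H2 by auto. lra.
Qed.

Lemma hull_rot p q r : triangle_hull p q r = triangle_hull q r p.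
Proof.
  apply functional_extensionality; intros x. apply propositional_extensionality. split.
  - intros [l1 [l2 [l3 [H1 [H2 [H3 [H4 Hx]]]]]]]. exists l2, l3, l1. repeat split; try lra.
    rewrite Hx. apply pt_eq; unfold vadd, vscale; simpl; ring.
  - intros [l1 [l2 [l3 [H1 [H2 [H3 [H4 Hx]]]]]]]. exists l3, l1, l2. repeat split; try lra.
    rewrite Hx. apply pt_eq; unfold vadd, vscale; simpl; ring.
Qed.

Lemma noncol_rot p q r : noncollinear p q r -> noncollinear q r p.
Proof.
  unfold noncollinear. intros H. dpts. unfold det2, vsub in *; simpl in *.
  intro H'; apply H. lra.
Qed.

Lemma all_vertices C p q r : convex C -> C p -> C q -> C r ->
  forall x, triangle_hull p q r x -> C x.
Proof.
  intros Hc Hp Hq Hr x [l1 [l2 [l3 [H1 [H2 [H3 [H4 Hx]]]]]]].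
  destruct (Req_dec (l2 + l3) 0) as [H0|H0].
  - assert (l2 = 0) by lra. assert (l3 = 0) by lra. subst.
    replace (vadd (vscale l1 p) (vadd (vscale 0 q) (vscale 0 r))) with p; auto.
    apply pt_eq; unfold vadd, vscale; simpl; replace l1 with 1 by lra; ring.
  - set (m := vadd q (vscale (l3 / (l2 + l3)) (vsub r q))).
    assert (Cm : C m). { apply Hc; auto. split. apply Rmult_le_pos; [lra|]. apply Rlt_le, Rinv_0_lt_compat; lra.
      apply Rmult_le_reg_r with (l2 + l3). lra. unfold Rdiv. rewrite Rmult_assoc, Rinv_l; lra. }
    replace x with (vadd p (vscale (l2 + l3) (vsub m p))).
    apply Hc; auto. lra.
    rewrite Hx. unfold m. replace l1 with (1 - l2 - l3) by lra.
    apply pt_eq; unfold vadd, vscale, vsub; simpl; field; auto.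
Qed.

Lemma abs_between x y : Rabs x <= y -> - y <= x <= y.
Proof. unfold Rabs; destruct Rcase_abs; lra. Qed.
Lemma abs_between_lt x y : Rabs x < y -> - y < x < y.
Proof. unfold Rabs; destruct Rcase_abs; lra. Qed.

Definition chords (L C : pt -> Prop) (t : R) : Prop :=
  exists a b, C a /\ C b /\ lattice_segment_length L a b t.

Lemma diam_chords L C : lattice_diam L C = Lub_Rbar (chords L C).
Proof. reflexivity. Qed.

Lemma chord_bound L C : is_lattice L -> Defs.bounded C -> exists M, forall t, chords L C t -> t <= M.
Proof.
  intros HL [M0 HM0]. destruct (L_norm_lb L HL) as [r [Hr Hlb]].
  exists (4 * M0 / r). intros t [a [b [Ca [Cb Hs]]]].
  destruct (seg_t L a b t Hs) as [v [Lv [Hv0 [Ht Hba]]]].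
  pose proof (Hlb v Lv Hv0). pose proof (HM0 a Ca). pose proof (HM0 b Cb).
  assert (Hn : vnorm (vsub b a) = t * vnorm v) by (rewrite Hba, vnorm_scale, Rabs_pos_eq; lra).
  assert (vnorm (vsub b a) <= 4 * M0).
  { eapply Rle_trans. apply vnorm_le_sum. unfold vsub; simpl.
    pose proof (vnorm_ge_fst a). pose proof (vnorm_ge_fst b).
    pose proof (vnorm_ge_snd a). pose proof (vnorm_ge_snd b).
    pose proof (Rabs_triang (fst b) (- fst a)). pose proof (Rabs_triang (snd b) (- snd a)).
    rewrite Rabs_Ropp in *. unfold Rminus. lra. }
  apply Rmult_le_reg_r with r; auto. unfold Rdiv. rewrite Rmult_assoc, Rinv_l by lra.
  assert (t * r <= t * vnorm v) by (apply Rmult_le_compat_l; lra). lra.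
Qed.

Lemma diam_mono L C C' : (forall x, C x -> C' x) -> Rbar_le (lattice_diam L C) (lattice_diam L C').
Proof.
  intros H. rewrite !diam_chords. destruct (Lub_Rbar_correct (chords L C)) as [_ H2]. apply H2.
  intros t [a [b [Ca [Cb Hs]]]]. apply lub_ge. exists a, b; auto.
Qed.

Lemma T_bounded p q r : noncollinear p q r -> Defs.bounded (triangle_hull p q r).
Proof.
  intros H. destruct (Qe_body p q r 0 H (Rle_refl 0)) as [_ [[M HM] _]]. exists M.
  intros x Hx. apply HM. apply T_sub_Qe; auto. lra.
Qed.

Lemma diam_T L p q r : is_lattice L -> noncollinear p q r ->
  exists d, d > 0 /\ lattice_diam L (triangle_hull p q r) = Finite d.
Proof.
  intros HL H. destruct (chord_bound L _ HL (T_bounded p q r H)) as [M HM].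
  pose proof HL as [_ [_ [_ [u [v [Lu [Lv Huv]]]]]]].
  assert (Hu : u <> origin). { intros ->. apply Huv. unfold det2, origin; simpl; ring. }
  destruct (prim L u HL Lu Hu) as [g [Lg [Hg0 [Hprim _]]]].
  set (A := vsub q p). set (B := vsub r p).
  set (eta := 1 / (6 * (1 + Rabs (la A B g) + Rabs (lb A B g)))).
  pose proof (Rabs_pos (la A B g)). pose proof (Rabs_pos (lb A B g)).
  assert (Heta : 0 < eta) by (apply Rdiv_lt_0_compat; lra).
  assert (Heta1 : eta * Rabs (la A B g) <= 1/6).
  { apply Rle_trans with (eta * (1 + Rabs (la A B g) + Rabs (lb A B g))). apply Rmult_le_compat_l; lra.
    right; unfold eta; field; lra. }
  assert (Heta2 : eta * Rabs (lb A B g) <= 1/6).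
  { apply Rle_trans with (eta * (1 + Rabs (la A B g) + Rabs (lb A B g))). apply Rmult_le_compat_l; lra.
    right; unfold eta; field; lra. }
  set (a := pt_at p q r (1/3) (1/3)). set (b := vadd a (vscale eta g)).
  destruct (coords_at p q r (1/3) (1/3) H) as [Ha1 Ha2]. fold a in Ha1, Ha2.
  assert (Hba : vsub b a = vscale eta g) by (unfold b; apply pt_eq; unfold vsub, vadd; simpl; ring).
  assert (Hb1 : cA p q r b = 1/3 + eta * la A B g).
  { rewrite <- Ha1. pose proof (cA_diff p q r a b H). fold A B in H2. rewrite Hba, la_scale in H2; auto. lra. }
  assert (Hb2 : cB p q r b = 1/3 + eta * lb A B g).
  { rewrite <- Ha2. pose proof (cB_diff p q r a b H). fold A B in H2. rewrite Hba, lb_scale in H2; auto. lra. }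
  assert (Hch : chords L (triangle_hull p q r) eta).
  { exists a, b. split; [|split].
    - apply hull_iff; auto. rewrite Ha1, Ha2. lra.
    - apply hull_iff; auto. rewrite Hb1, Hb2.
      assert (Rabs (eta * la A B g) <= 1/6) by (rewrite Rabs_mult, Rabs_pos_eq; lra).
      assert (Rabs (eta * lb A B g) <= 1/6) by (rewrite Rabs_mult, Rabs_pos_eq; lra).
      apply abs_between in H2. apply abs_between in H3. lra.
    - apply (seg_make L g); auto. }
  destruct (lub_fin _ eta M Hch HM) as [l [Hl [Hl1 Hl2]]].
  exists l. split. lra. rewrite diam_chords. auto.
Qed.

Definition rpos (x : R) := Rmax x 0.
Definition rneg (x : R) := Rmax (- x) 0.

Lemma LF L p q r d z : is_lattice L -> noncollinear p q r ->
  lattice_diam L (triangle_hull p q r) = Finite d -> d > 0 -> L z -> z <> origin ->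
  Rabs (la (vsub q p) (vsub r p) (vscale d z)) < 1 ->
  Rabs (lb (vsub q p) (vsub r p) (vscale d z)) < 1 ->
  Rabs (la (vsub q p) (vsub r p) (vscale d z) + lb (vsub q p) (vsub r p) (vscale d z)) < 1 -> False.
Proof.
  intros HL H Hd Hdp Lz Hz Hg1 Hg2 Hg12.
  set (A := vsub q p) in *. set (B := vsub r p) in *.
  pose proof (coord_decomp A B (vscale d z) H) as Hdec.
  set (g1 := la A B (vscale d z)) in *. set (g2 := lb A B (vscale d z)) in *.
  destruct (prim L z HL Lz Hz) as [g [Lg [Hg0 [Hprim [k [Hk Hzk]]]]]].
  set (m := Rmax (Rabs g1) (Rmax (Rabs g2) (Rabs (g1 + g2)))).
  assert (Hm1 : m < 1) by (unfold m; repeat apply Rmax_lub_lt; auto).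
  assert (Ha1 : Rabs g1 <= m) by (unfold m; apply Rmax_l).
  assert (Ha2 : Rabs g2 <= m) by (unfold m; eapply Rle_trans; [|apply Rmax_r]; apply Rmax_l).
  assert (Ha3 : Rabs (g1 + g2) <= m) by (unfold m; eapply Rle_trans; [|apply Rmax_r]; apply Rmax_r).
  assert (Hm0 : 0 <= m) by (pose proof (Rabs_pos g1); lra).
  set (lam := 2 / (1 + m)).
  assert (Hlam1 : 1 < lam) by (unfold lam; apply Rmult_lt_reg_r with (1+m); [lra|]; unfold Rdiv; rewrite Rmult_assoc, Rinv_l; lra).
  assert (Hlamm : lam * m < 1) by (unfold lam; apply Rmult_lt_reg_r with (1+m); [lra|];
     replace (2 / (1 + m) * m * (1 + m)) with (2 * m) by (field; lra); lra).
  assert (Hp : rpos g1 + rpos g2 <= m /\ 0 <= rpos g1 /\ 0 <= rpos g2).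
  { unfold rpos, Rmax, Rabs in *. repeat destruct Rle_dec; repeat destruct Rcase_abs; lra. }
  assert (Hn : rneg g1 + rneg g2 <= m /\ 0 <= rneg g1 /\ 0 <= rneg g2).
  { unfold rneg, Rmax, Rabs in *. repeat destruct Rle_dec; repeat destruct Rcase_abs; lra. }
  assert (Hpn1 : rpos g1 = g1 + rneg g1) by (unfold rpos, rneg, Rmax; repeat destruct Rle_dec; lra).
  assert (Hpn2 : rpos g2 = g2 + rneg g2) by (unfold rpos, rneg, Rmax; repeat destruct Rle_dec; lra).
  set (a := pt_at p q r (lam * rneg g1) (lam * rneg g2)).
  set (b := pt_at p q r (lam * rpos g1) (lam * rpos g2)).
  assert (Ta : triangle_hull p q r a).
  { apply hull_iff; auto. unfold a. destruct (coords_at p q r (lam * rneg g1) (lam * rneg g2) H) as [-> ->].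
    assert (lam * (rneg g1 + rneg g2) <= lam * m) by (apply Rmult_le_compat_l; lra). nra. }
  assert (Tb : triangle_hull p q r b).
  { apply hull_iff; auto. unfold b. destruct (coords_at p q r (lam * rpos g1) (lam * rpos g2) H) as [-> ->].
    assert (lam * (rpos g1 + rpos g2) <= lam * m) by (apply Rmult_le_compat_l; lra). nra. }
  assert (Hba : vsub b a = vscale (lam * d * IZR k) g).
  { transitivity (vscale lam (vscale d z)).
    - rewrite Hdec. unfold a, b, pt_at. fold A B. rewrite Hpn1, Hpn2.
      apply pt_eq; unfold vsub, vadd, vscale; simpl; ring.
    - rewrite Hzk. apply pt_eq; unfold vscale; simpl; ring. }
  assert (Hk1 : 1 <= IZR k) by (apply IZR_le; lia).
  assert (Ht : lam * d * IZR k > 0) by (apply Rmult_lt_0_compat; [apply Rmult_lt_0_compat|]; lra).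
  assert (Hch : chords L (triangle_hull p q r) (lam * d * IZR k)).
  { exists a, b. split; auto. split; auto. apply (seg_make L g); auto. }
  pose proof (lub_ge _ _ Hch) as Hle. rewrite <- diam_chords, Hd in Hle. simpl in Hle.
  assert (lam * d <= lam * d * IZR k) by (rewrite <- (Rmult_1_r (lam * d)) at 1; apply Rmult_le_compat_l; nra).
  nra.
Qed.

Lemma sliver L p q r d e : is_lattice L -> noncollinear p q r ->
  lattice_complete L (triangle_hull p q r) ->
  lattice_diam L (triangle_hull p q r) = Finite d -> d > 0 -> 0 < e <= 1/2 ->
  exists z, L z /\
    Rabs (la (vsub q p) (vsub r p) (vscale d z)) < 1 /\
    Rabs (lb (vsub q p) (vsub r p) (vscale d z)) < 1 /\
    1 <= la (vsub q p) (vsub r p) (vscale d z) + lb (vsub q p) (vsub r p) (vscale d z) <= 1 + e.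
Proof.
  intros HL H Hc Hd Hdp He.
  assert (Hne : lattice_diam L (Qe p q r e) <> lattice_diam L (triangle_hull p q r)).
  { apply Hc. apply Qe_body; auto; lra. apply Qe_strict; auto; lra. }
  assert (Hch : exists t, chords L (Qe p q r e) t /\ d < t).
  { destruct (classic (exists t, chords L (Qe p q r e) t /\ d < t)) as [X|X]; auto. exfalso.
    apply Hne. rewrite Hd. apply Rbar_le_antisym.
    - rewrite diam_chords. apply lub_le. intros t Ht. destruct (Rle_lt_dec t d); auto.
      exfalso; apply X; exists t; auto.
    - rewrite <- Hd. apply diam_mono. intros x; apply T_sub_Qe; auto; lra. }
  destruct Hch as [t [[a [b [Ca [Cb Hs]]]] Hdt]].
  destruct (seg_t L a b t Hs) as [v [Lv [Hv0 [Ht Hba]]]].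
  set (A := vsub q p). set (B := vsub r p).
  set (lam := d / t).
  assert (Hlam0 : 0 < lam) by (apply Rdiv_lt_0_compat; lra).
  assert (Hlam1 : lam < 1) by (unfold lam; apply Rmult_lt_reg_r with t; [lra|]; unfold Rdiv; rewrite Rmult_assoc, Rinv_l; lra).
  assert (Hdv : vscale d v = vscale lam (vsub b a)).
  { rewrite Hba. apply pt_eq; unfold vscale, lam; simpl; field; lra. }
  assert (HG1 : la A B (vscale d v) = lam * (cA p q r b - cA p q r a)).
  { rewrite Hdv, la_scale by auto. unfold A, B. rewrite cA_diff; auto. }
  assert (HG2 : lb A B (vscale d v) = lam * (cB p q r b - cB p q r a)).
  { rewrite Hdv, lb_scale by auto. unfold A, B. rewrite cB_diff; auto. }
  unfold Qe in Ca, Cb.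
  set (X1 := cA p q r b - cA p q r a) in *. set (X2 := cB p q r b - cB p q r a) in *.
  assert (HX1 : Rabs X1 <= 1) by (apply Rabs_le; unfold X1; lra).
  assert (HX2 : Rabs X2 <= 1) by (apply Rabs_le; unfold X2; lra).
  assert (HX12 : - (1 + e) <= X1 + X2 <= 1 + e) by (unfold X1, X2; lra).
  assert (Hl1 : Rabs (lam * X1) < 1) by (rewrite Rabs_mult, Rabs_pos_eq by lra; nra).
  assert (Hl2 : Rabs (lam * X2) < 1) by (rewrite Rabs_mult, Rabs_pos_eq by lra; nra).
  assert (HS : - (1 + e) <= lam * X1 + lam * X2 <= 1 + e) by nra.
  destruct (Rlt_le_dec (Rabs (lam * X1 + lam * X2)) 1) as [Hlt|Hge].
  - exfalso. apply (LF L p q r d v HL H Hd Hdp Lv Hv0); fold A B; rewrite ?HG1, ?HG2; auto.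
  - destruct (Rle_lt_dec 0 (lam * X1 + lam * X2)) as [Hpos|Hneg].
    + exists v. fold A B. rewrite HG1, HG2. split; auto. split; auto. split; auto.
      rewrite Rabs_pos_eq in Hge; lra.
    + exists (vscale (-1) v). split. apply L_neg; auto. fold A B.
      replace (vscale d (vscale (-1) v)) with (vscale (-1) (vscale d v))
        by (apply pt_eq; unfold vscale; simpl; ring).
      rewrite la_scale, lb_scale, HG1, HG2 by auto.
      split. rewrite Rabs_mult, Rabs_m1, Rmult_1_l; auto.
      split. rewrite Rabs_mult, Rabs_m1, Rmult_1_l; auto.
      rewrite Rabs_left in Hge; lra.
Qed.

Lemma edge L p q r d : is_lattice L -> noncollinear p q r ->
  lattice_complete L (triangle_hull p q r) ->
  lattice_diam L (triangle_hull p q r) = Finite d -> d > 0 ->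
  exists u s, L u /\ 0 < s < 1 /\
    vscale d u = vadd (vscale (1 - s) (vsub q p)) (vscale s (vsub r p)).
Proof.
  intros HL H Hc Hd Hdp.
  set (A := vsub q p). set (B := vsub r p).
  destruct (sliver L p q r d (1/2) HL H Hc Hd Hdp) as [z0 [Lz0 [H1 [H2 H3]]]]. lra.
  fold A B in H1, H2, H3.
  assert (Hall : forall e, 0 < e <= 1/2 ->
    la A B (vscale d z0) + lb A B (vscale d z0) <= 1 + e).
  { intros e He. destruct (sliver L p q r d e HL H Hc Hd Hdp He) as [z [Lz [K1 [K2 K3]]]].
    fold A B in K1, K2, K3.
    destruct (classic (vsub z0 z = origin)) as [Heq|Hneq].
    - apply vsub_eq0 in Heq. subst. lra.
    - exfalso. apply (LF L p q r d (vsub z0 z) HL H Hd Hdp); auto. apply L_sub; auto.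
      all: fold A B.
      all: replace (vscale d (vsub z0 z)) with (vsub (vscale d z0) (vscale d z))
             by (apply pt_eq; unfold vsub, vscale; simpl; ring).
      all: rewrite ?la_sub, ?lb_sub by auto.
      all: apply abs_between_lt in H1; apply abs_between_lt in H2;
           apply abs_between_lt in K1; apply abs_between_lt in K2.
      all: apply Rabs_def1; lra. }
  assert (Hs1 : la A B (vscale d z0) + lb A B (vscale d z0) = 1).
  { destruct (Rle_lt_dec (la A B (vscale d z0) + lb A B (vscale d z0)) 1) as [|Hgt]. lra.
    exfalso. set (w := la A B (vscale d z0) + lb A B (vscale d z0)) in *.
    pose proof (Hall (Rmin (1/2) ((w - 1)/2))).
    assert (Rmin (1/2) ((w-1)/2) <= (w-1)/2) by apply Rmin_r.
    assert (0 < Rmin (1/2) ((w-1)/2) <= 1/2).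
    { split. apply Rmin_glb_lt; lra. apply Rmin_l. }
    specialize (H0 H5). lra. }
  exists z0, (lb A B (vscale d z0)).
  apply abs_between_lt in H1; apply abs_between_lt in H2.
  split; auto. split. lra.
  rewrite (coord_decomp A B (vscale d z0) H) at 1.
  replace (la A B (vscale d z0)) with (1 - lb A B (vscale d z0)) by lra. reflexivity.
Qed.

Lemma comp_eq (x y : pt) : x = y -> fst x = fst y /\ snd x = snd y.
Proof. intros ->; auto. Qed.

Lemma structure L p q r : is_lattice L -> noncollinear p q r ->
  lattice_complete L (triangle_hull p q r) ->
  exists d s up uq, d > 0 /\ lattice_diam L (triangle_hull p q r) = Finite d /\ 0 < s < 1 /\
    L up /\ L uq /\
    vscale d up = vadd (vscale (1 - s) (vsub q p)) (vscale s (vsub r p)) /\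
    vscale d uq = vadd (vscale (-1) (vsub q p)) (vscale (1 - s) (vsub r p)).
Proof.
  intros HL H Hc.
  destruct (diam_T L p q r HL H) as [d [Hdp Hd]].
  destruct (edge L p q r d HL H Hc Hd Hdp) as [up [s [Lup [Hs Hup]]]].
  pose proof (hull_rot p q r) as R1. pose proof (hull_rot q r p) as R2.
  pose proof (noncol_rot p q r H) as H1. pose proof (noncol_rot q r p H1) as H2.
  destruct (edge L q r p d HL H1) as [uq [t [Luq [Ht Huq]]]]; auto.
  { rewrite <- R1; auto. } { rewrite <- R1; auto. }
  destruct (edge L r p q d HL H2) as [ur [w [Lur [Hw Hur]]]]; auto.
  { rewrite <- R2, <- R1; auto. } { rewrite <- R2, <- R1; auto. }
  set (z := vadd up (vadd uq ur)).
  assert (Hz : vscale d z = vadd (vscale (w - s) (vsub q p)) (vscale (s - t) (vsub r p))).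
  { apply comp_eq in Hup. apply comp_eq in Huq. apply comp_eq in Hur.
    unfold z. dpts. unfold vscale, vadd, vsub in *; simpl in *.
    destruct Hup, Huq, Hur. apply pt_eq; simpl; lra. }
  assert (Lz : L z) by (unfold z; apply L_add; auto; apply L_add; auto).
  destruct (classic (z = origin)) as [Hz0|Hz0].
  - assert (Hc0 : la (vsub q p) (vsub r p) (vscale d z) = w - s /\ lb (vsub q p) (vsub r p) (vscale d z) = s - t)
      by (apply coord_of; auto).
    rewrite Hz0 in Hc0.
    replace (vscale d origin) with origin in Hc0 by (apply pt_eq; unfold vscale, origin; simpl; ring).
    assert (la (vsub q p) (vsub r p) origin = 0) by (unfold la, det2, origin; simpl; unfold Rdiv; ring).
    assert (lb (vsub q p) (vsub r p) origin = 0) by (unfold lb, det2, origin; simpl; unfold Rdiv; ring).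
    destruct Hc0 as [Hc1 Hc2].
    assert (w = s) by lra. assert (t = s) by lra. subst w t.
    exists d, s, up, uq. do 6 (split; [auto|]).
    apply comp_eq in Huq. dpts. unfold vscale, vadd, vsub in *; simpl in *. destruct Huq.
    apply pt_eq; simpl; lra.
  - exfalso.
    destruct (coord_of (vsub q p) (vsub r p) (vscale d z) (w - s) (s - t) H Hz) as [E1 E2].
    apply (LF L p q r d z HL H Hd Hdp Lz Hz0); rewrite ?E1, ?E2; apply Rabs_def1; lra.
Qed.

Lemma abs_lin2 a b u v : 0 <= a -> 0 <= b -> Rabs (a * u + b * v) <= (a + b) * (Rabs u + Rabs v).
Proof.
  intros Ha Hb. eapply Rle_trans. apply Rabs_triang. rewrite !Rabs_mult, (Rabs_pos_eq a Ha), (Rabs_pos_eq b Hb).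
  pose proof (Rabs_pos u). pose proof (Rabs_pos v). nra.
Qed.

Lemma dot_sub3 y a b p : dot y (vsub a b) = dot y (vsub a p) - dot y (vsub b p).
Proof. unfold dot, vsub; simpl; ring. Qed.

Lemma gen L p q r C' w y c : noncollinear p q r ->
  lattice_width L (triangle_hull p q r) = Finite w -> dual L y -> y <> origin -> c > 0 ->
  (forall x, triangle_hull p q r x ->
     c * (cA p q r x + cB p q r x) <= dot y (vsub x p) /\ dot y (vsub x p) <= w) ->
  convex_body C' -> (forall x, C' x -> triangle_hull p q r x) -> ~ C' p ->
  lattice_width L C' <> lattice_width L (triangle_hull p q r).
Proof.
  intros H Hw Hy Hy0 Hc Hb [Hconv [Hbd [Hcl [x0 [e0 [He0 Hint]]]]]] Hsub Hnp.
  assert (Cx0 : C' x0).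
  { apply Hint. replace (vsub x0 x0) with origin by (apply pt_eq; unfold vsub, origin; simpl; ring).
    unfold vnorm, dot, origin; simpl. replace (0 * 0 + 0 * 0) with 0 by ring. rewrite sqrt_0. lra. }
  assert (Hfar : exists eps, eps > 0 /\ forall z, C' z -> eps <= vnorm (vsub z p)).
  { apply NNPP. intro Hn. apply Hnp. apply Hcl. intros eps Heps. apply NNPP. intro Hn2. apply Hn.
    exists eps. split; auto. intros z Cz. destruct (Rle_lt_dec eps (vnorm (vsub z p))); auto.
    exfalso. apply Hn2. exists z; auto. }
  destruct Hfar as [eps [Heps Hfar]].
  set (A := vsub q p). set (B := vsub r p).
  set (K := Rabs (fst A) + Rabs (snd A) + Rabs (fst B) + Rabs (snd B) + 1).
  assert (HK : 1 <= K) by (unfold K; pose proof (Rabs_pos (fst A)); pose proof (Rabs_pos (snd A));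
     pose proof (Rabs_pos (fst B)); pose proof (Rabs_pos (snd B)); lra).
  assert (Hlow : forall z, C' z -> c * eps / K <= dot y (vsub z p)).
  { intros z Cz. pose proof (Hsub z Cz) as Tz. pose proof (Hb z Tz) as [Hb1 _].
    apply hull_iff in Tz; auto. destruct Tz as [Ta [Tb _]].
    assert (Hd : vsub z p = vadd (vscale (cA p q r z) A) (vscale (cB p q r z) B)) by exact (coord_decomp A B (vsub z p) H).
    assert (Hn : vnorm (vsub z p) <= (cA p q r z + cB p q r z) * K).
    { eapply Rle_trans. apply vnorm_le_sum. rewrite Hd. unfold vadd, vscale; cbn [fst snd].
      pose proof (abs_lin2 _ _ (fst A) (fst B) Ta Tb). pose proof (abs_lin2 _ _ (snd A) (snd B) Ta Tb).
      unfold K. nra. }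
    pose proof (Hfar z Cz).
    assert (eps / K <= cA p q r z + cB p q r z).
    { apply Rmult_le_reg_r with K. lra. unfold Rdiv. rewrite Rmult_assoc, Rinv_l; lra. }
    apply Rle_trans with (c * (cA p q r z + cB p q r z)); auto.
    unfold Rdiv. rewrite Rmult_assoc. apply Rmult_le_compat_l; lra. }
  assert (Hkap : 0 < c * eps / K) by (apply Rdiv_lt_0_compat; [apply Rmult_lt_0_compat|]; lra).
  set (E := fun v => exists a b, C' a /\ C' b /\ v = dot y (vsub a b)).
  assert (E0 : E 0). { exists x0, x0. repeat split; auto. unfold dot, vsub; simpl; ring. }
  assert (Eub : forall v, E v -> v <= w - c * eps / K).
  { intros v [a [b [Ca [Cb ->]]]]. rewrite (dot_sub3 y a b p).
    pose proof (Hlow b Cb). pose proof (Hb a (Hsub a Ca)). lra. }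
  destruct (lub_fin E 0 _ E0 Eub) as [w2 [Hw2 [_ Hw2b]]].
  assert (Hle : Rbar_le (lattice_width L C') (Finite w2)).
  { apply glb_le. exists y. split; [auto|]. split; [auto|]. exact Hw2. }
  intros Heq. rewrite Heq, Hw in Hle. simpl in Hle. lra.
Qed.

Lemma abs_ge1 x : 1 <= x \/ x <= -1 -> 1 <= Rabs x.
Proof. unfold Rabs; destruct Rcase_abs; lra. Qed.

Lemma int_case (m n : Z) s : 0 < s < 1 -> (m <> 0 \/ n <> 0)%Z ->
  1 <= Rabs ((1 - s) * IZR m - s * IZR n) \/ 1 <= Rabs (IZR m + (1 - s) * IZR n) \/
  1 <= Rabs (s * IZR m + IZR n).
Proof.
  intros Hs Hmn.
  destruct (Z.eq_dec m 0) as [Hm|Hm].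
  - subst. right; right. apply abs_ge1. destruct Hmn as [|Hn]; [lia|].
    assert ((1 <= n)%Z \/ (n <= -1)%Z) as [H|H] by lia.
    + apply IZR_le in H. simpl. lra.
    + apply IZR_le in H. simpl. lra.
  - destruct (Z.eq_dec n 0) as [Hn|Hn].
    + subst. right; left. apply abs_ge1. simpl.
      assert ((1 <= m)%Z \/ (m <= -1)%Z) as [H|H] by lia; apply IZR_le in H; simpl in H; lra.
    + assert ((1 <= m)%Z \/ (m <= -1)%Z) as [H1|H1] by lia; apply IZR_le in H1;
      (assert ((1 <= n)%Z \/ (n <= -1)%Z) as [H2|H2] by lia); apply IZR_le in H2; simpl in H1, H2.
      * right; left. apply abs_ge1. left. nra.
      * left. apply abs_ge1. left. nra.
      * left. apply abs_ge1. right. nra.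
      * right; left. apply abs_ge1. right. nra.
Qed.

Lemma dot_comm u v : dot u v = dot v u.
Proof. unfold dot; ring. Qed.
Lemma dot_comb a u b v y : dot (vadd (vscale a u) (vscale b v)) y = a * dot u y + b * dot v y.
Proof. unfold dot, vadd, vscale; simpl; ring. Qed.
Lemma dot_scale d u y : dot (vscale d u) y = d * dot u y.
Proof. unfold dot, vscale; simpl; ring. Qed.

Lemma vertex_p p q r : triangle_hull p q r p.
Proof. exists 1, 0, 0. repeat split; try lra. apply pt_eq; unfold vadd, vscale; simpl; ring. Qed.
Lemma vertex_q p q r : triangle_hull p q r q.
Proof. exists 0, 1, 0. repeat split; try lra. apply pt_eq; unfold vadd, vscale; simpl; ring. Qed.
Lemma vertex_r p q r : triangle_hull p q r r.
Proof. exists 0, 0, 1. repeat split; try lra. apply pt_eq; unfold vadd, vscale; simpl; ring. Qed.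

Lemma y_zero y A B : det2 A B <> 0 -> dot y A = 0 -> dot y B = 0 -> y = origin.
Proof.
  intros H HA HB. destruct y as [y1 y2], A as [a1 a2], B as [b1 b2].
  unfold dot, det2, origin in *; simpl in *.
  assert (y1 * (a1 * b2 - a2 * b1) = 0).
  { replace (y1 * (a1 * b2 - a2 * b1)) with (b2 * (y1 * a1 + y2 * a2) - a2 * (y1 * b1 + y2 * b2)) by ring.
    rewrite HA, HB; ring. }
  assert (y2 * (a1 * b2 - a2 * b1) = 0).
  { replace (y2 * (a1 * b2 - a2 * b1)) with (a1 * (y1 * b1 + y2 * b2) - b1 * (y1 * a1 + y2 * a2)) by ring.
    rewrite HA, HB; ring. }
  apply Rmult_integral in H0. apply Rmult_integral in H1.
  destruct H0; [|contradiction]. destruct H1; [|contradiction]. subst; auto.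
Qed.

Lemma ratio_bound D X d a : 0 < D -> 0 < d -> D * X = d * a -> 1 <= Rabs a -> d / D <= Rabs X.
Proof.
  intros HD Hd E Ha. assert (D * Rabs X = d * Rabs a).
  { rewrite <- (Rabs_pos_eq D), <- (Rabs_pos_eq d) by lra. rewrite <- !Rabs_mult, E; auto. }
  apply Rmult_le_reg_l with D; auto. unfold Rdiv. replace (D * (d * / D)) with d by (field; lra). nra.
Qed.

Lemma abs_le_of x v : x <= v -> - x <= v -> Rabs x <= v.
Proof. intros; apply Rabs_le; lra. Qed.

Lemma main_p L p q r : is_lattice L -> noncollinear p q r ->
  lattice_complete L (triangle_hull p q r) ->
  forall C', convex_body C' -> (forall x, C' x -> triangle_hull p q r x) -> ~ C' p ->
  lattice_width L C' <> lattice_width L (triangle_hull p q r).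
Proof.
  intros HL H Hc C' HC' Hsub Hnp.
  destruct (structure L p q r HL H Hc) as [d [s [up [uq [Hdp [Hd [Hs [Lup [Luq [Hup Huq]]]]]]]]]].
  set (A := vsub q p) in *. set (B := vsub r p) in *.
  set (D := (1 - s) * (1 - s) + s).
  assert (HD : 0 < D) by (unfold D; nra).
  assert (Hdet : det2 up uq <> 0).
  { intro H0. assert (H1 : det2 (vscale d up) (vscale d uq) = d * d * det2 up uq) by (unfold det2, vscale; simpl; ring).
    rewrite Hup, Huq, H0 in H1.
    assert (H2 : det2 (vadd (vscale (1 - s) A) (vscale s B)) (vadd (vscale (-1) A) (vscale (1 - s) B)) = D * det2 A B)
      by (unfold D, det2, vadd, vscale; simpl; ring).
    rewrite H2, Rmult_0_r in H1. apply Rmult_integral in H1. destruct H1; [lra|]. apply H. exact H1. }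
  assert (Hspan : forall x, L x -> exists k l : Z, x = vadd (vscale (IZR k) up) (vscale (IZR l) uq)).
  { intros x Lx.
    set (al := la up uq x). set (be := lb up uq x).
    pose proof (coord_decomp up uq x Hdet) as Hx. fold al be in Hx.
    set (k := Zfloor al). set (l := Zfloor be).
    pose proof (Zfloor_bound al) as Hk. pose proof (Zfloor_bound be) as Hl. fold k in Hk. fold l in Hl.
    set (a' := al - IZR k). set (b' := be - IZR l).
    assert (Ha' : 0 <= a' < 1) by (unfold a'; lra).
    assert (Hb' : 0 <= b' < 1) by (unfold b'; lra).
    set (x' := vsub x (vadd (vscale (IZR k) up) (vscale (IZR l) uq))).
    assert (Lx' : L x') by (apply L_sub; auto; apply L_add; auto; apply L_zmul; auto).
    assert (Hx' : x' = vadd (vscale a' up) (vscale b' uq)).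
    { unfold x', a', b'. rewrite Hx at 1. apply pt_eq; unfold vsub, vadd, vscale; simpl; ring. }
    exists k, l. destruct (classic (x' = origin)) as [H0|H0].
    - unfold x' in H0. apply vsub_eq0 in H0. auto.
    - exfalso. clearbody a' b'.
      assert (Hdx : vscale d x' = vadd (vscale (a' * (1 - s) - b') A) (vscale (a' * s + b' * (1 - s)) B)).
      { transitivity (vadd (vscale a' (vscale d up)) (vscale b' (vscale d uq))).
        rewrite Hx'. apply pt_eq; unfold vadd, vscale; simpl; ring.
        rewrite Hup, Huq. apply pt_eq; unfold vadd, vscale; simpl; ring. }
      destruct (coord_of A B _ _ _ H Hdx) as [E1 E2].
      apply (LF L p q r d x' HL H Hd Hdp Lx' H0); fold A B; rewrite ?E1, ?E2; apply Rabs_def1; nra. }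
  set (y0 := vscale (1 / det2 up uq) (snd uq, - fst uq)).
  assert (Hy0p : dot up y0 = 1).
  { unfold y0, dot, vscale; simpl. unfold det2 in *. field; auto. }
  assert (Hy0q : dot uq y0 = 0).
  { unfold y0, dot, vscale; simpl. unfold det2 in *. field; auto. }
  assert (Hdual : dual L y0).
  { intros x Lx. destruct (Hspan x Lx) as [k [l ->]]. exists k. rewrite dot_comb, Hy0p, Hy0q. ring. }
  assert (Hy00 : y0 <> origin).
  { intros E. rewrite E in Hy0p. unfold dot, origin in Hy0p; simpl in Hy0p. lra. }
  assert (Hrel : forall y, d * dot up y = (1 - s) * dot A y + s * dot B y /\
                           d * dot uq y = - dot A y + (1 - s) * dot B y).
  { intros y. pose proof (dot_scale d up y) as E1. pose proof (dot_scale d uq y) as E2.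
    rewrite Hup, dot_comb in E1. rewrite Huq, dot_comb in E2. split; lra. }
  set (W := d / D).
  assert (HW : 0 < W) by (apply Rdiv_lt_0_compat; lra).
  destruct (Hrel y0) as [R1 R2]. rewrite Hy0p in R1. rewrite Hy0q in R2.
  assert (HX : dot A y0 = (1 - s) * dot B y0) by lra.
  assert (HY : dot B y0 = W).
  { unfold W. apply Rmult_eq_reg_l with D; [|lra]. replace (D * (d / D)) with d by (field; lra).
    unfold D. rewrite HX in R1. lra. }
  rewrite HY in HX.
  assert (Hf : forall x, dot y0 (vsub x p) = cA p q r x * ((1 - s) * W) + cB p q r x * W).
  { intros x. assert (Hdx : vsub x p = vadd (vscale (cA p q r x) A) (vscale (cB p q r x) B))
      by exact (coord_decomp A B (vsub x p) H).
    rewrite dot_comm, Hdx, dot_comb, HX, HY. ring. }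
  assert (Hfb : forall x, triangle_hull p q r x ->
     (1 - s) * W * (cA p q r x + cB p q r x) <= dot y0 (vsub x p) /\ dot y0 (vsub x p) <= W).
  { intros x Tx. apply hull_iff in Tx; auto. rewrite Hf.
    destruct Tx as [Ta [Tb Tab]]. set (a := cA p q r x) in *. set (b := cB p q r x) in *.
    assert (0 <= s * W * b) by (apply Rmult_le_pos; [apply Rmult_le_pos|]; lra).
    assert (0 <= s * W * a) by (apply Rmult_le_pos; [apply Rmult_le_pos|]; lra).
    assert (W * (a + b) <= W * 1) by (apply Rmult_le_compat_l; lra).
    split; nra. }
  assert (Hdw : dir_width (triangle_hull p q r) y0 = Finite W).
  { apply lub_exact.
    - exists r, p. split; [apply vertex_r|]. split; [apply vertex_p|].
      rewrite dot_comm. fold B. auto.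
    - intros v [a [b [Ta [Tb ->]]]]. rewrite (dot_sub3 y0 a b p).
      pose proof (Hfb a Ta). pose proof (Hfb b Tb).
      apply hull_iff in Tb; auto.
      assert (0 <= (1 - s) * W * (cA p q r b + cB p q r b)) by (apply Rmult_le_pos; [apply Rmult_le_pos|]; lra).
      lra. }
  assert (Hwid : lattice_width L (triangle_hull p q r) = Finite W).
  { apply glb_exact.
    - exists y0. split; auto.
    - intros v [y [Hy [Hy0 Hdy]]].
      assert (Hle : forall a b, triangle_hull p q r a -> triangle_hull p q r b -> dot y (vsub a b) <= v).
      { intros a b Ta Tb.
        assert (G : Rbar_le (Finite (dot y (vsub a b))) (dir_width (triangle_hull p q r) y))
          by (apply lub_ge; exists a, b; auto).
        rewrite Hdy in G. exact G. }
      pose proof (Hle q p (vertex_q _ _ _) (vertex_p _ _ _)) as V1.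
      pose proof (Hle p q (vertex_p _ _ _) (vertex_q _ _ _)) as V2.
      pose proof (Hle r p (vertex_r _ _ _) (vertex_p _ _ _)) as V3.
      pose proof (Hle p r (vertex_p _ _ _) (vertex_r _ _ _)) as V4.
      pose proof (Hle r q (vertex_r _ _ _) (vertex_q _ _ _)) as V5.
      pose proof (Hle q r (vertex_q _ _ _) (vertex_r _ _ _)) as V6.
      assert (EA : dot y (vsub q p) = dot A y) by (rewrite dot_comm; auto).
      assert (EB : dot y (vsub r p) = dot B y) by (rewrite dot_comm; auto).
      assert (EA' : dot y (vsub p q) = - dot A y) by (unfold A, dot, vsub; simpl; ring).
      assert (EB' : dot y (vsub p r) = - dot B y) by (unfold B, dot, vsub; simpl; ring).
      assert (EC : dot y (vsub r q) = dot B y - dot A y) by (unfold A, B, dot, vsub; simpl; ring).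
      assert (EC' : dot y (vsub q r) = - (dot B y - dot A y)) by (unfold A, B, dot, vsub; simpl; ring).
      rewrite EA in V1. rewrite EA' in V2. rewrite EB in V3. rewrite EB' in V4. rewrite EC in V5. rewrite EC' in V6.
      destruct (Hy up Lup) as [m Hm]. destruct (Hy uq Luq) as [n Hn].
      destruct (Hrel y) as [R3 R4]. rewrite Hm in R3. rewrite Hn in R4.
      set (X := dot A y) in *. set (Y := dot B y) in *.
      assert (HmX : D * X = d * ((1 - s) * IZR m - s * IZR n)).
      { unfold D. transitivity ((1 - s) * (d * IZR m) - s * (d * IZR n)); [|ring]. rewrite R3, R4. ring. }
      assert (HnY : D * Y = d * (IZR m + (1 - s) * IZR n)).
      { unfold D. transitivity (d * IZR m + (1 - s) * (d * IZR n)); [|ring]. rewrite R3, R4. ring. }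
      assert (HYX : D * (Y - X) = d * (s * IZR m + IZR n)).
      { unfold D. transitivity (s * (d * IZR m) + (d * IZR n)); [|ring]. rewrite R3, R4. ring. }
      assert (Hmn : (m <> 0 \/ n <> 0)%Z).
      { destruct (Z.eq_dec m 0) as [Hm0|Hm0]; [|left; auto].
        destruct (Z.eq_dec n 0) as [Hn0|Hn0]; [|right; auto].
        exfalso. subst m n. apply Hy0.
        assert (E1 : D * Y = 0) by (rewrite HnY; simpl; ring).
        assert (E2 : D * X = 0) by (rewrite HmX; simpl; ring).
        apply Rmult_integral in E1. apply Rmult_integral in E2.
        assert (Y = 0) by (destruct E1; lra). assert (X = 0) by (destruct E2; lra).
        apply (y_zero y A B H); rewrite dot_comm; auto. }
      destruct (int_case m n s Hs Hmn) as [G|[G|G]].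
      + pose proof (ratio_bound D X d _ HD Hdp HmX G). pose proof (abs_le_of X v V1). fold W in H0. lra.
      + pose proof (ratio_bound D Y d _ HD Hdp HnY G). pose proof (abs_le_of Y v V3). fold W in H0. lra.
      + pose proof (ratio_bound D (Y - X) d _ HD Hdp HYX G). pose proof (abs_le_of (Y - X) v V5). fold W in H0. lra. }
  apply (gen L p q r C' W y0 ((1 - s) * W) H Hwid Hdual Hy00); auto.
  apply Rmult_lt_0_compat; lra.
Qed.

Lemma part1 L p q r : is_lattice L -> noncollinear p q r ->
  lattice_complete L (triangle_hull p q r) -> lattice_reduced L (triangle_hull p q r).
Proof.
  intros HL H Hc C' HC' [Hsub [x [Tx Nx]]].
  pose proof HC' as [Hconv _].
  destruct (classic (C' p)) as [Cp|Cp]; [destruct (classic (C' q)) as [Cq|Cq]; [destruct (classic (C' r)) as [Cr|Cr]|]|].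
  - exfalso. apply Nx. apply (all_vertices C' p q r); auto.
  - pose proof (hull_rot p q r) as R1. pose proof (hull_rot q r p) as R2.
    rewrite R1, R2 in *. apply main_p; auto. apply noncol_rot, noncol_rot; auto.
  - pose proof (hull_rot p q r) as R1. rewrite R1 in *. apply main_p; auto. apply noncol_rot; auto.
  - apply main_p; auto.
Qed.

Definition Z2 (x : pt) : Prop := exists m n : Z, x = (IZR m, IZR n).
Definition p0 : pt := (0, 0).
Definition q0 : pt := (1, 0).
Definition r0 : pt := (0, 1).

Lemma IZR_small k : Rabs (IZR k) < 1 -> k = 0%Z.
Proof.
  intros H. apply abs_between_lt in H. destruct H as [H1 H2].
  assert (H1' : IZR (-1) < IZR k) by (simpl; lra). apply lt_IZR in H1'. apply lt_IZR in H2. lia.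
Qed.

Lemma Z2_lattice : is_lattice Z2.
Proof.
  split; [|split; [|split]].
  - exists 0%Z, 0%Z. reflexivity.
  - intros x y [m1 [n1 ->]] [m2 [n2 ->]]. exists (m1 - m2)%Z, (n1 - n2)%Z.
    unfold vsub; simpl. rewrite !minus_IZR. reflexivity.
  - intros x [m1 [n1 ->]]. exists (1/2). split. lra.
    intros y [m2 [n2 ->]] Hn.
    pose proof (vnorm_ge_fst (vsub (IZR m2, IZR n2) (IZR m1, IZR n1))).
    pose proof (vnorm_ge_snd (vsub (IZR m2, IZR n2) (IZR m1, IZR n1))).
    unfold vsub in *; simpl in *. rewrite <- !minus_IZR in *.
    assert (E1 : (m2 - m1)%Z = 0%Z) by (apply IZR_small; lra).
    assert (E2 : (n2 - n1)%Z = 0%Z) by (apply IZR_small; lra).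
    assert (m2 = m1) by lia. assert (n2 = n1) by lia. subst; auto.
  - exists (1, 0), (0, 1). split. exists 1%Z, 0%Z; reflexivity. split. exists 0%Z, 1%Z; reflexivity.
    unfold det2; simpl. lra.
Qed.

Lemma nc0 : noncollinear p0 q0 r0.
Proof. unfold noncollinear, det2, vsub, p0, q0, r0; simpl. lra. Qed.

Lemma cA0 x : cA p0 q0 r0 x = fst x.
Proof. unfold cA, la, det2, vsub, p0, q0, r0; simpl. field. Qed.
Lemma cB0 x : cB p0 q0 r0 x = snd x.
Proof. unfold cB, lb, det2, vsub, p0, q0, r0; simpl. field. Qed.

Lemma T0_iff x : triangle_hull p0 q0 r0 x <-> 0 <= fst x /\ 0 <= snd x /\ fst x + snd x <= 1.
Proof. rewrite hull_iff by apply nc0. rewrite cA0, cB0. tauto. Qed.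

Lemma Z2_dual y : dual Z2 y -> exists m n : Z, y = (IZR m, IZR n).
Proof.
  intros Hy. destruct (Hy (1, 0)) as [m Hm]. exists 1%Z, 0%Z; reflexivity.
  destruct (Hy (0, 1)) as [n Hn]. exists 0%Z, 1%Z; reflexivity.
  exists m, n. unfold dot in *; simpl in *. apply pt_eq; simpl; lra.
Qed.

Lemma Z2_dual_of m n : dual Z2 (IZR m, IZR n).
Proof.
  intros x [a [b ->]]. exists (a * m + b * n)%Z. unfold dot; simpl.
  rewrite plus_IZR, !mult_IZR. ring.
Qed.

Lemma w0 : lattice_width Z2 (triangle_hull p0 q0 r0) = Finite 1.
Proof.
  apply glb_exact.
  - exists (1, 1). split. apply (Z2_dual_of 1 1). split.
    { intros E. injection E. lra. }
    apply lub_exact.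
    + exists q0, p0. split. apply vertex_q. split. apply vertex_p. unfold dot, vsub, q0, p0; simpl; ring.
    + intros v [a [b [Ta [Tb ->]]]]. apply T0_iff in Ta. apply T0_iff in Tb.
      unfold dot, vsub; simpl. lra.
  - intros v [y [Hy [Hy0 Hdy]]].
    assert (Hle : forall a b, triangle_hull p0 q0 r0 a -> triangle_hull p0 q0 r0 b -> dot y (vsub a b) <= v).
    { intros a b Ta Tb.
      assert (G : Rbar_le (Finite (dot y (vsub a b))) (dir_width (triangle_hull p0 q0 r0) y))
        by (apply lub_ge; exists a, b; auto).
      rewrite Hdy in G. exact G. }
    pose proof (Hle q0 p0 (vertex_q _ _ _) (vertex_p _ _ _)) as V1.
    pose proof (Hle p0 q0 (vertex_p _ _ _) (vertex_q _ _ _)) as V2.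
    pose proof (Hle r0 p0 (vertex_r _ _ _) (vertex_p _ _ _)) as V3.
    pose proof (Hle p0 r0 (vertex_p _ _ _) (vertex_r _ _ _)) as V4.
    destruct (Z2_dual y Hy) as [m [n ->]].
    unfold dot, vsub, p0, q0, r0 in V1, V2, V3, V4; simpl in V1, V2, V3, V4.
    destruct (Z.eq_dec m 0) as [Hm|Hm].
    + destruct (Z.eq_dec n 0) as [Hn|Hn].
      * subst. exfalso. apply Hy0. reflexivity.
      * assert ((1 <= n)%Z \/ (n <= -1)%Z) as [H|H] by lia; apply IZR_le in H; simpl in H; lra.
    + assert ((1 <= m)%Z \/ (m <= -1)%Z) as [H|H] by lia; apply IZR_le in H; simpl in H; lra.
Qed.

Lemma sumq x : cA q0 r0 p0 x + cB q0 r0 p0 x = 1 - fst x.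
Proof. unfold cA, cB, la, lb, det2, vsub, p0, q0, r0; simpl. field. Qed.
Lemma sumr x : cA r0 p0 q0 x + cB r0 p0 q0 x = 1 - snd x.
Proof. unfold cA, cB, la, lb, det2, vsub, p0, q0, r0; simpl. field. Qed.

Lemma red0 : lattice_reduced Z2 (triangle_hull p0 q0 r0).
Proof.
  intros C' HC' [Hsub [x [Tx Nx]]].
  pose proof HC' as [Hconv _].
  destruct (classic (C' p0)) as [Cp|Cp]; [destruct (classic (C' q0)) as [Cq|Cq]; [destruct (classic (C' r0)) as [Cr|Cr]|]|].
  - exfalso. apply Nx. apply (all_vertices C' p0 q0 r0); auto.
  - pose proof (hull_rot p0 q0 r0) as R1. pose proof (hull_rot q0 r0 p0) as R2.
    assert (W : lattice_width Z2 (triangle_hull r0 p0 q0) = Finite 1) by (rewrite <- R2, <- R1; exact w0).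
    rewrite R1, R2 in Hsub |- *.
    apply (gen Z2 r0 p0 q0 C' 1 (IZR 0, IZR (-1)) 1); auto.
    apply noncol_rot, noncol_rot, nc0. apply Z2_dual_of.
    intros E; injection E; simpl; lra. lra.
    intros z Tz. rewrite <- R2, <- R1 in Tz. apply T0_iff in Tz. rewrite sumr.
    unfold dot, vsub, r0; simpl. lra.
  - pose proof (hull_rot p0 q0 r0) as R1.
    assert (W : lattice_width Z2 (triangle_hull q0 r0 p0) = Finite 1) by (rewrite <- R1; exact w0).
    rewrite R1 in Hsub |- *.
    apply (gen Z2 q0 r0 p0 C' 1 (IZR (-1), IZR 0) 1); auto.
    apply noncol_rot, nc0. apply Z2_dual_of.
    intros E; injection E; simpl; lra. lra.
    intros z Tz. rewrite <- R1 in Tz. apply T0_iff in Tz. rewrite sumq.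
    unfold dot, vsub, q0; simpl. lra.
  - apply (gen Z2 p0 q0 r0 C' 1 (IZR 1, IZR 1) 1); auto.
    apply nc0. apply w0. apply Z2_dual_of.
    intros E; injection E; simpl; lra. lra.
    intros z Tz. apply T0_iff in Tz. rewrite cA0, cB0.
    unfold dot, vsub, p0; simpl. lra.
Qed.

Lemma chord1 C : C p0 -> C q0 -> chords Z2 C 1.
Proof.
  intros Hp Hq. exists p0, q0. split; auto. split; auto.
  apply (seg_make Z2 (1, 0)).
  - exists 1%Z, 0%Z; reflexivity.
  - intros E; injection E; lra.
  - intros x [a [b ->]] [r Hr]. exists a. apply comp_eq in Hr. unfold vscale in *; simpl in *.
    destruct Hr. apply pt_eq; simpl; lra.
  - lra.
  - apply pt_eq; unfold vsub, vscale, p0, q0; simpl; ring.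
Qed.

Lemma chordQ t : chords Z2 (Qe p0 q0 r0 1) t -> t <= 1.
Proof.
  intros [a [b [Ca [Cb Hs]]]]. unfold Qe in Ca, Cb. rewrite cA0, cB0 in Ca, Cb.
  destruct (seg_t Z2 a b t Hs) as [v [[m [n ->]] [Hv0 [Ht Hba]]]].
  apply comp_eq in Hba. unfold vsub, vscale in Hba; simpl in Hba. destruct Hba as [E1 E2].
  destruct (Z.eq_dec m 0) as [Hm|Hm].
  - destruct (Z.eq_dec n 0) as [Hn|Hn].
    + subst. exfalso. apply Hv0. reflexivity.
    + assert ((1 <= n)%Z \/ (n <= -1)%Z) as [H|H] by lia; apply IZR_le in H; simpl in H; nra.
  - assert ((1 <= m)%Z \/ (m <= -1)%Z) as [H|H] by lia; apply IZR_le in H; simpl in H; nra.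
Qed.

Lemma notcomp0 : ~ lattice_complete Z2 (triangle_hull p0 q0 r0).
Proof.
  intros Hc. apply (Hc (Qe p0 q0 r0 1)).
  - apply Qe_body. apply nc0. lra.
  - apply Qe_strict. apply nc0. lra.
  - assert (Hsub : forall x, triangle_hull p0 q0 r0 x -> Qe p0 q0 r0 1 x)
      by (intros x; apply T_sub_Qe; [apply nc0 | lra]).
    rewrite !diam_chords. rewrite (lub_exact _ 1), (lub_exact _ 1); auto.
    + apply chord1; apply vertex_p || apply vertex_q.
    + intros t [a [b [Ca [Cb Hs]]]]. apply chordQ. exists a, b; auto.
    + apply chord1; apply Hsub; apply vertex_p || apply vertex_q.
    + apply chordQ.
Qed.

Theorem theorem1p4 :
  (forall (L : pt -> Prop) (p q r : pt),
      is_lattice L -> noncollinear p q r ->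
      lattice_complete L (triangle_hull p q r) -> lattice_reduced L (triangle_hull p q r)) /\
  (exists (L : pt -> Prop) (p q r : pt),
      is_lattice L /\ noncollinear p q r /\
      lattice_reduced L (triangle_hull p q r) /\ ~ lattice_complete L (triangle_hull p q r)).
Proof.
  split.
  - intros L p q r HL H Hc. apply part1; auto.
  - exists Z2, p0, q0, r0. split. apply Z2_lattice. split. apply nc0. split. apply red0. apply notcomp0.
Qed.
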